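(* Let $\mathcal A$ be an ordered normed algebra with unit $e$ whose algebra cone $\mathcal A^+$ is normal. Then there do not exist $a,b\in\mathcal A$, with at least one of $a,b$ positive, such that $ab-ba\geq e$.
   Context: A normed algebra $\mathcal A$ (real or complex, with submultiplicative norm) with unit $e$. A cone is a nonempty subset $\mathcal A^+\subseteq\mathcal A$ with $\mathcal A^++\mathcal A^+\subseteq\mathcal A^+$, $\lambda\mathcal A^+\subseteq\mathcal A^+$ for all $\lambda\geq 0$, and $\mathcal A^+\cap(-\mathcal A^+)=\{0\}$; it induces the partial order $a\leq b \iff b-a\in\mathcal A^+$. Elements of $\mathcal A^+$ are called positive. The cone is an algebra cone if $\mathcal A^+\cdot\mathcal A^+\subseteq\mathcal A^+$ and $e\in\mathcal A^+$; then $\mathcal A$ is called an ordered normed algebra. The cone is normal if there is a constant $\alpha>0$ such that $0\leq x\leq y$ implies $\|x\|\leq\alpha\|y\|$. *)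

(* Defs.v *)
From HB Require Import structures.
From mathcomp Require Import all_boot all_order all_algebra.
From mathcomp Require Import reals.
Set Implicit Arguments. Unset Strict Implicit. Unset Printing Implicit Defensive.
Import Order.TTheory GRing.Theory Num.Theory.
Local Open Scope ring_scope.

Record is_algebra_norm (R : realType) (A : algType R) (nrm : A -> R) : Prop := {
  nrm_ge0 : forall x, 0 <= nrm x;
  nrm_eq0 : forall x, nrm x = 0 -> x = 0;
  nrm_triangle : forall x y, nrm (x + y) <= nrm x + nrm y;
  nrm_scale : forall (l : R) x, nrm (l *: x) = `|l| * nrm x;
  nrm_submul : forall x y, nrm (x * y) <= nrm x * nrm y }.

Definition is_cone (R : realType) (A : algType R) (P : A -> Prop) : Prop :=
  (exists x, P x) /\
  (forall x y, P x -> P y -> P (x + y)) /\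
  (forall (l : R) x, 0 <= l -> P x -> P (l *: x)) /\
  (forall x, P x -> P (- x) -> x = 0).

Definition cone_le (R : realType) (A : algType R) (P : A -> Prop) (a b : A) : Prop :=
  P (b - a).

Definition is_algebra_cone (R : realType) (A : algType R) (P : A -> Prop) : Prop :=
  is_cone P /\ (forall x y, P x -> P y -> P (x * y)) /\ P 1.

Definition is_normal_cone (R : realType) (A : algType R) (nrm : A -> R)
    (P : A -> Prop) : Prop :=
  exists alpha : R, 0 < alpha /\
    forall x y, cone_le P 0 x -> cone_le P x y -> nrm x <= alpha * nrm y.

(* Main.v *)
Require Import Defs.
From HB Require Import structures.
From mathcomp Require Import all_boot all_order all_algebra.
From mathcomp Require Import reals.
Import Order.TTheory GRing.Theory Num.Theory.
Local Open Scope ring_scope.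

Lemma key_step (R : realType) (A : algType R) (P : A -> Prop) :
  is_algebra_cone P -> forall x b : A, P x -> P (x * b - b * x - 1) ->
  forall n : nat, P (x ^+ n.+1 * b - b * x ^+ n.+1 - (n.+1)%:R *: x ^+ n).
Proof.
move=> [[_ [Hadd [Hsc _]]] [Hmul H1]] x b Px Hc.
elim=> [|n IH]; first by rewrite expr1 expr0 scale1r.
have Pxn : P (x ^+ n.+1) by rewrite exprS; elim: n {IH} => [|n IHn];
  [rewrite expr0 mulr1 | rewrite exprS; apply: Hmul].
have := Hadd _ _ (Hmul _ _ Px IH) (Hmul _ _ Hc Pxn).
congr P.
rewrite !mulrBr !mulrBl mul1r.
rewrite [x * (x ^+ _ * b)]mulrA -exprS [x * (b * _)]mulrA -scalerAr -exprS.
rewrite -[b * x * _]mulrA -exprS (mulrSr 1 n.+1) scalerDl scale1r.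
set u := x ^+ n.+2 * b; set v := b * x ^+ n.+2; set w := x * b * x ^+ n.+1.
set z := (n.+1)%:R *: x ^+ n.+1.
rewrite opprD addrA -[u - w - z + _]addrA [-z + _]addrC !addrA addrNK.
by [].
Qed.

Arguments key_step {R A P} _ {x b}.

Lemma pos_pow (R : realType) (A : algType R) (P : A -> Prop) :
  is_algebra_cone P -> forall x : A, P x -> forall n, P (x ^+ n).
Proof.
move=> [_ [Hmul H1]] x Px; elim=> [|n IH]; first by rewrite expr0.
by rewrite exprS; apply: Hmul.
Qed.

Arguments pos_pow {R A P} _ {x}.

Lemma zero_step (R : realType) (A : algType R) (P : A -> Prop) :
  is_algebra_cone P -> forall x b : A, P x -> P (x * b - b * x - 1) ->
  forall k, x ^+ k.+1 = 0 -> x ^+ k = 0.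
Proof.
move=> HP x b Px Hc k Hk.
have := key_step HP Px Hc k; rewrite Hk mul0r mulr0 subrr sub0r => HN.
have HQ : P ((k.+1)%:R *: x ^+ k).
  have := pos_pow HP Px k.
  case: HP => [[_ [_ [Hsc _]]] _]; apply: Hsc; by rewrite ler0n.
case: HP => [[_ [_ [_ Hanti]]] _].
have := Hanti _ HQ HN => /eqP; rewrite scaler_eq0 pnatr_eq0 /= => /eqP.
done.
Qed.

Arguments zero_step {R A P} _ {x b}.

Lemma main_pos (R : realType) (A : algType R) (nrm : A -> R)
    (P : A -> Prop) :
  is_algebra_norm nrm -> is_algebra_cone P -> is_normal_cone nrm P ->
  forall x b : A, P x -> P (x * b - b * x - 1) -> False.
Proof.
move=> Hn HP [al [al0 Hnorm]] x b Px Hc.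
have nrmN : forall z, nrm (- z) = nrm z.
  by move=> z; rewrite -scaleN1r (nrm_scale Hn) normrN normr1 mul1r.
set K := al * (2 * (nrm x * nrm b)).
have K0 : 0 <= K.
  have := nrm_ge0 Hn x; have := nrm_ge0 Hn b => hb hx.
  rewrite /K; apply: mulr_ge0; first exact: ltW.
  by apply: mulr_ge0; [rewrite ler0n | apply: mulr_ge0].
have Hineq : forall k, (k.+1)%:R * nrm (x ^+ k) <= K * nrm (x ^+ k).
  move=> k.
  have := Hnorm ((k.+1)%:R *: x ^+ k) (x ^+ k.+1 * b - b * x ^+ k.+1).
  rewrite /cone_le subr0 (nrm_scale Hn) ger0_norm ?ler0n //.
  move=> /(_ _ (key_step HP Px Hc k)) H.
  have Q : P (k.+1%:R *: x ^+ k).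
    have := pos_pow HP Px k.
    case: (HP) => [[_ [_ [Hsc _]]] _]; apply: Hsc; by rewrite ler0n.
  apply: le_trans (H Q) _.
  rewrite /K -mulrA ler_wpM2l ?(ltW al0) //.
  apply: le_trans (nrm_triangle Hn _ _) _; rewrite nrmN.
  have h1 : nrm (x ^+ k.+1 * b) <= nrm x * nrm b * nrm (x ^+ k).
    apply: le_trans (nrm_submul Hn _ _) _.
    rewrite exprS [_ * nrm b * _]mulrC mulrA ler_wpM2r ?(nrm_ge0 Hn) //.
    rewrite mulrC; exact: (nrm_submul Hn).
  have h2 : nrm (b * x ^+ k.+1) <= nrm x * nrm b * nrm (x ^+ k).
    apply: le_trans (nrm_submul Hn _ _) _.
    rewrite [nrm x * nrm b]mulrC -mulrA ler_wpM2l ?(nrm_ge0 Hn) //.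
    rewrite exprS; exact: (nrm_submul Hn).
  rewrite mulr2n mulrDl mulrDl. 
  by rewrite !mul1r; apply: lerD.
set k := Num.bound K.
have Hk : K < (k.+1)%:R.
  apply: lt_trans (archi_boundP K0) _; by rewrite ltr_nat.
have Z : x ^+ k = 0.
  apply: (nrm_eq0 Hn); apply/eqP; rewrite eq_le (nrm_ge0 Hn) andbT.
  by have := Hineq k; rewrite -subr_ge0 -mulrBl nmulr_rge0 // subr_lt0.
have Zall : forall j, (j <= k)%N -> x ^+ (k - j) = 0.
  elim=> [|j IH] hj; first by rewrite subn0.
  apply: (zero_step HP Px Hc); rewrite subnSK //; exact: IH (ltnW hj).
have := Zall k (leqnn k); rewrite subnn expr0 => /eqP.
by rewrite oner_eq0.
Qed.

Arguments main_pos {R A nrm P} _ _ _ {x b}.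

Theorem corollary2p2 (R : realType) (A : algType R) (nrm : A -> R)
    (P : A -> Prop) :
  is_algebra_norm nrm -> is_algebra_cone P -> is_normal_cone nrm P ->
  ~ (exists a b : A, (P a \/ P b) /\ cone_le P 1 (a * b - b * a)).
Proof.
move=> Hn HP Hnc [a [b [[Pa|Pb] Hc]]].
  exact: (main_pos Hn HP Hnc Pa Hc).
apply: (main_pos Hn HP Hnc (b := - a) Pb).
by move: Hc; rewrite /cone_le mulrN mulNr opprK [- _ + _]addrC.
Qed.
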